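(* Let $\mathbb{K}$ be a field of characteristic $0$, $\alpha\in\mathbb{K}$, $A=A(\alpha,0,1)$ and $\omega=du-\alpha ud-1\in A$. For $p\in\langle\omega\rangle$ let $[p]$ denote its class in the $A$-bimodule $\langle\omega\rangle/\langle\omega\rangle^2$. Then $\{[u^i\omega d^l]: i,l\ge0\}$ is a $\mathbb{K}$-linear basis of $\langle\omega\rangle/\langle\omega\rangle^2$. Moreover, if $\alpha\neq1$, then for all $i,l\ge0$ $$[u^i\omega d^lu]=\frac{\alpha^l-1}{\alpha-1}[u^i\omega d^{l-1}],\qquad [du^i\omega d^l]=\frac{\alpha^i-1}{\alpha-1}[u^{i-1}\omega d^l],$$ where the right-hand sides are interpreted as $0$ when $l=0$ (first formula) or $i=0$ (second formula).
   Context: For $(\alpha,\beta,\gamma)\in\mathbb{K}^3$, the down-up algebra $A(\alpha,\beta,\gamma)$ is the quotient of $\mathbb{K}\langle d,u\rangle$ by the two-sided ideal generated by $d^2u-(\alpha dud+\beta ud^2+\gamma d)$ and $du^2-(\alpha udu+\beta u^2d+\gamma u)$. $\langle\omega\rangle$ is the two-sided ideal generated by $\omega$. *)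

(* Defs.v *)
From HB Require Import structures.
From mathcomp Require Import all_boot all_order all_algebra.
Set Implicit Arguments. Unset Strict Implicit. Unset Printing Implicit Defensive.
Import Order.TTheory GRing.Theory Num.Theory.
Local Open Scope ring_scope.

Definition downup_rel (K : fieldType) (B : algType K) (al be ga : K) (d u : B) : Prop :=
  d * d * u = al *: (d * u * d) + be *: (u * d * d) + ga *: d /\
  d * u * u = al *: (u * d * u) + be *: (u * u * d) + ga *: u.

Definition is_alg_hom (K : fieldType) (A B : algType K) (f : A -> B) : Prop :=
  (forall x y : A, f (x + y) = f x + f y) /\
  (forall (k : K) (x : A), f (k *: x) = k *: f x) /\
  (forall x y : A, f (x * y) = f x * f y) /\
  f 1 = 1.

(* (A, d, u) is the down-up algebra A(al,be,ga): it is generated by d, u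
   subject to the defining relations, i.e. it is the quotient of K<d,u> by
   the ideal of the relations; expressed by its universal property
   (initial K-algebra with two elements satisfying the relations). *)
Definition is_downup_algebra (K : fieldType) (al be ga : K)
    (A : algType K) (d u : A) : Prop :=
  downup_rel al be ga d u /\
  forall (B : algType K) (d' u' : B), downup_rel al be ga d' u' ->
    exists f : A -> B,
      [/\ is_alg_hom f, f d = d', f u = u' &
          forall g : A -> B, is_alg_hom g -> g d = d' -> g u = u' ->
            forall x, g x = f x].

Definition in_ideal (K : fieldType) (A : algType K) (w x : A) : Prop :=
  exists s : seq (A * A), x = \sum_(p <- s) p.1 * w * p.2.

Definition in_ideal_sq (K : fieldType) (A : algType K) (w x : A) : Prop :=
  exists s : seq (A * A),
    (forall p, p \in s -> in_ideal w p.1 /\ in_ideal w p.2) /\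
    x = \sum_(p <- s) p.1 * p.2.

(* Main.v *)
Require Import Defs.
From HB Require Import structures.
From mathcomp Require Import all_boot all_order all_algebra.
From mathcomp Require Import boolp.
From mathcomp Require Import ring.
Set Implicit Arguments. Unset Strict Implicit. Unset Printing Implicit Defensive.
Import Order.TTheory GRing.Theory Num.Theory.
Local Open Scope ring_scope.

Section Ops.
Variable K : fieldType.
Definition V := bool -> nat -> nat -> K.
Definition vadd (v w : V) : V := fun s k m => v s k m + w s k m.
Definition vscale (a : K) (v : V) : V := fun s k m => a * v s k m.
Definition vopp (v : V) : V := fun s k m => - v s k m.
Definition vzero : V := fun _ _ _ => 0.

Record op := Op {
  app : V -> V;
  appD : forall v w, app (vadd v w) = vadd (app v) (app w);
  appZ : forall a v, app (vscale a v) = vscale a (app v);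
  appS : forall v, (forall k m, v true k m = 0) -> forall k m, app v true k m = 0 }.

Lemma op_inj (x y : op) : app x = app y -> x = y.
Proof.
case: x => ax Dx Zx Sx; case: y => ay Dy Zy Sy /= E; subst ay.
by congr Op; apply: Prop_irrelevance.
Qed.

Ltac vext := apply: funext; intro; apply: funext; intro; apply: funext; intro.

Lemma app0 (x : op) : app x vzero = vzero.
Proof.
have E : vzero = vscale 0 vzero.
  vext. rewrite /vscale mul0r. done.
rewrite {1}E appZ; vext; rewrite /vscale /vzero mul0r. done.
Qed.

HB.instance Definition _ := gen_eqMixin op.
HB.instance Definition _ := gen_choiceMixin op.

Definition op0 : op.
refine (@Op (fun _ => vzero) _ _ _) => //.
- by move=> v w; vext; rewrite /vadd /vzero addr0.
- by move=> a v; vext; rewrite /vscale /vzero mulr0.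
Defined.

Definition opadd (x y : op) : op.
refine (@Op (fun v => vadd (app x v) (app y v)) _ _ _).
- by move=> v w; rewrite !appD; vext; rewrite /vadd; ring.
- by move=> a v; rewrite !appZ; vext; rewrite /vadd /vscale; ring.
- by move=> v H k m; rewrite /vadd !appS // addr0.
Defined.

Definition opopp (x : op) : op.
refine (@Op (fun v => vopp (app x v)) _ _ _).
- by move=> v w; rewrite !appD; vext; rewrite /vadd /vopp; ring.
- by move=> a v; rewrite !appZ; vext; rewrite /vopp /vscale; ring.
- by move=> v H k m; rewrite /vopp appS // oppr0.
Defined.

Lemma opaddA : associative opadd.
Proof. by move=> x y z; apply: op_inj; apply: funext => v; vext; rewrite /= /vadd addrA. Qed.
Lemma opaddC : commutative opadd.
Proof. by move=> x y; apply: op_inj; apply: funext => v; vext; rewrite /= /vadd addrC. Qed.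
Lemma opadd0 : left_id op0 opadd.
Proof. by move=> x; apply: op_inj; apply: funext => v; vext; rewrite /= /vadd /vzero add0r. Qed.
Lemma opaddN : left_inverse op0 opopp opadd.
Proof. by move=> x; apply: op_inj; apply: funext => v; vext; rewrite /= /vadd /vopp /vzero addNr. Qed.

HB.instance Definition _ := GRing.isZmodule.Build op opaddA opaddC opadd0 opaddN.

Definition op1 : op.
refine (@Op (fun v => v) _ _ _) => //.
Defined.

Definition opmul (x y : op) : op.
refine (@Op (fun v => app x (app y v)) _ _ _).
- by move=> v w; rewrite !appD.
- by move=> a v; rewrite !appZ.
- by move=> v H k m; rewrite !appS //; apply: appS.
Defined.

Lemma opmulA : associative opmul.
Proof. by move=> x y z; apply: op_inj. Qed.
Lemma opmul1 : left_id op1 opmul.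
Proof. by move=> x; apply: op_inj. Qed.
Lemma opmul1r : right_id op1 opmul.
Proof. by move=> x; apply: op_inj. Qed.
Lemma opmulDl : left_distributive opmul +%R.
Proof. by move=> x y z; apply: op_inj. Qed.
Lemma opmulDr : right_distributive opmul +%R.
Proof. by move=> x y z; apply: op_inj; apply: funext => v /=; rewrite appD. Qed.
Lemma op1_neq0 : op1 != 0.
Proof.
apply/eqP => H.
have := congr1 (fun f => app f (fun _ _ _ => 1) true 0 0) H.
by rewrite /= /vzero => /eqP; rewrite oner_eq0.
Qed.

HB.instance Definition _ := GRing.Zmodule_isNzRing.Build op opmulA opmul1 opmul1r opmulDl opmulDr op1_neq0.

Definition opscale (a : K) (x : op) : op.
refine (@Op (fun v => vscale a (app x v)) _ _ _).
- by move=> v w; rewrite !appD; vext; rewrite /vadd /vscale; ring.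
- by move=> b v; rewrite !appZ; vext; rewrite /vscale; ring.
- by move=> v H k m; rewrite /vscale appS // mulr0.
Defined.

Lemma opscaleA a b v : opscale a (opscale b v) = opscale (a * b) v.
Proof. by apply: op_inj; apply: funext => w; vext; rewrite /= /vscale mulrA. Qed.
Lemma opscale1 : left_id 1 opscale.
Proof. by move=> x; apply: op_inj; apply: funext => w; vext; rewrite /= /vscale mul1r. Qed.
Lemma opscaleDr : right_distributive opscale +%R.
Proof. by move=> a x y; apply: op_inj; apply: funext => w; vext; rewrite /= /vscale /vadd mulrDr. Qed.
Lemma opscaleDl v : {morph opscale^~ v: a b / a + b}.
Proof. by move=> a b; apply: op_inj; apply: funext => w; vext; rewrite /= /vscale /vadd mulrDl. Qed.

HB.instance Definition _ := GRing.Zmodule_isLmodule.Build K op opscaleA opscale1 opscaleDr opscaleDl.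

Lemma opscaleAl (a : K) (x y : op) : a *: (x * y) = (a *: x) * y.
Proof. by apply: op_inj. Qed.
HB.instance Definition _ := GRing.Lmodule_isLalgebra.Build K op opscaleAl.
Lemma opscaleAr (a : K) (x y : op) : a *: (x * y) = x * (a *: y).
Proof. by apply: op_inj; apply: funext => v /=; rewrite appZ. Qed.
HB.instance Definition _ := GRing.Lalgebra_isAlgebra.Build K op opscaleAr.

Lemma app_mul (x y : op) v : app (x * y) v = app x (app y v). Proof. by []. Qed.
Lemma app_add (x y : op) v : app (x + y) v = vadd (app x v) (app y v). Proof. by []. Qed.
Lemma app_opp (x : op) v : app (- x) v = vopp (app x v). Proof. by []. Qed.
Lemma app_scale a (x : op) v : app (a *: x) v = vscale a (app x v). Proof. by []. Qed.
Lemma app_one v : app 1 v = v. Proof. by []. Qed.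
Lemma app_zero v : app 0 v = vzero. Proof. by []. Qed.

End Ops.

Fixpoint cc (K : fieldType) (al : K) (n : nat) : K :=
  if n is n'.+1 then al * cc al n' + 1 else 0.

Section Model.
Variables (K : fieldType) (al : K).
Ltac vext := apply: funext; intro; apply: funext; intro; apply: funext; intro.

Definition Dapp (v : V K) : V K := fun s k m =>
  if s then al ^+ k * (if m is m'.+1 then v true k m' else 0) + cc al k.+1 * v true k.+1 m
  else al ^+ k * v true k.+1 m + cc al k.+1 * v false k.+1 m.
Definition Uapp (v : V K) : V K := fun s k m => if k is k'.+1 then v s k' m else 0.

Definition Dop : op K.
refine (@Op K Dapp _ _ _).
- move=> v w; apply: funext => -[]; apply: funext => k; apply: funext => -[|m];
  rewrite /Dapp /vadd /=; ring.
- move=> a v; apply: funext => -[]; apply: funext => k; apply: funext => -[|m];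
  rewrite /Dapp /vscale /=; ring.
- by move=> v H k m; rewrite /Dapp !H; case: m => *; rewrite ?H; ring.
Defined.

Definition Uop : op K.
refine (@Op K Uapp _ _ _).
- move=> v w; apply: funext => s; apply: funext => -[|k]; apply: funext => m;
  rewrite /Uapp /vadd /= ?addr0 //.
- move=> a v; apply: funext => s; apply: funext => -[|k]; apply: funext => m;
  rewrite /Uapp /vscale /= ?mulr0 //.
- by move=> v H k m; rewrite /Uapp; case: k => *; rewrite ?H.
Defined.

Definition Om : op K := Dop * Uop - al *: (Uop * Dop) - 1.
Definition Wv (v : V K) : V K := fun s k m => if s then 0 else if k is 0 then v true 0 m else 0.

Lemma app_Om v : app Om v = Wv v.
Proof.
apply: funext => -[]; apply: funext => -[|k]; apply: funext => -[|m];
rewrite /Om /= /vadd /vopp /vscale /Dapp /Uapp /Wv /= ?exprS ?expr0; ring.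
Qed.

Lemma DOm : Dop * Om = 0.
Proof.
apply: op_inj; apply: funext => v; rewrite app_mul app_Om.
apply: funext => -[]; apply: funext => k; apply: funext => -[|m];
rewrite /= /Dapp /Wv /vzero /=; ring.
Qed.

Lemma OmU : Om * Uop = 0.
Proof.
apply: op_inj; apply: funext => v; rewrite app_mul app_Om.
apply: funext => -[]; apply: funext => -[|k]; apply: funext => m;
by rewrite /= /Uapp /Wv /vzero /=.
Qed.

Lemma model_rel : downup_rel al 0 1 Dop Uop.
Proof.
split.
- apply/eqP; rewrite scale0r scale1r addr0 -subr_eq0; apply/eqP.
  have := DOm; rewrite /Om !mulrBr mulr1 -scalerAr.
  rewrite (mulrA Dop Dop Uop) (mulrA Dop Uop Dop) => <-.
  by rewrite opprD addrA.
- apply/eqP; rewrite scale0r scale1r addr0 -subr_eq0; apply/eqP.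
  have := OmU; rewrite /Om !mulrBl mul1r -scalerAl -(mulrA Dop Uop Uop) -(mulrA Uop Dop Uop) => <-.
  by rewrite opprD addrA.
Qed.
End Model.

Section Ideal.
Variables (K : fieldType) (A : algType K) (w : A).

Lemma in_ideal0 : in_ideal w 0.
Proof. by exists [::]; rewrite big_nil. Qed.

Lemma in_idealD x y : in_ideal w x -> in_ideal w y -> in_ideal w (x + y).
Proof. by move=> [s ->] [t ->]; exists (s ++ t); rewrite big_cat. Qed.

Lemma in_idealMl a x : in_ideal w x -> in_ideal w (a * x).
Proof.
move=> [s ->]; exists [seq (a * p.1, p.2) | p <- s].
by rewrite big_map mulr_sumr; apply: eq_bigr => p _; rewrite /= !mulrA.
Qed.

Lemma in_idealMr x b : in_ideal w x -> in_ideal w (x * b).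
Proof.
move=> [s ->]; exists [seq (p.1, p.2 * b) | p <- s].
by rewrite big_map mulr_suml; apply: eq_bigr => p _; rewrite /= !mulrA.
Qed.

Lemma in_ideal_gen a b : in_ideal w (a * w * b).
Proof. by exists [:: (a, b)]; rewrite big_cons big_nil addr0. Qed.

Lemma in_idealZ k x : in_ideal w x -> in_ideal w (k *: x).
Proof. by move=> H; rewrite -mulr_algl; apply: in_idealMl. Qed.

Definition I2 x := in_ideal_sq w x.

Lemma I2_0 : I2 0.
Proof. by exists [::]; rewrite big_nil. Qed.

Lemma I2_D x y : I2 x -> I2 y -> I2 (x + y).
Proof.
move=> [s [Hs ->]] [t [Ht ->]]; exists (s ++ t); rewrite big_cat; split => //.
by move=> p; rewrite mem_cat => /orP [] ?; [apply: Hs | apply: Ht].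
Qed.

Lemma I2_Ml a x : I2 x -> I2 (a * x).
Proof.
move=> [s [Hs ->]]; exists [seq (a * p.1, p.2) | p <- s]; split.
  move=> p /mapP [q /Hs [H1 H2] ->] /=; split => //; exact: in_idealMl.
by rewrite big_map mulr_sumr; apply: eq_bigr => p _; rewrite /= !mulrA.
Qed.

Lemma I2_Mr x b : I2 x -> I2 (x * b).
Proof.
move=> [s [Hs ->]]; exists [seq (p.1, p.2 * b) | p <- s]; split.
  move=> p /mapP [q /Hs [H1 H2] ->] /=; split => //; exact: in_idealMr.
by rewrite big_map mulr_suml; apply: eq_bigr => p _; rewrite /= !mulrA.
Qed.

Lemma I2_Z k x : I2 x -> I2 (k *: x).
Proof. by move=> H; rewrite -mulr_algl; apply: I2_Ml. Qed.

Lemma I2_N x : I2 x -> I2 (- x).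
Proof. by move=> H; rewrite -scaleN1r; apply: I2_Z. Qed.

Lemma I2_prod x y : in_ideal w x -> in_ideal w y -> I2 (x * y).
Proof.
move=> Hx Hy; exists [:: (x, y)]; rewrite big_cons big_nil addr0; split => //.
by move=> p; rewrite inE => /eqP ->.
Qed.

Lemma I2_wxw a b c : I2 (a * w * b * w * c).
Proof.
have -> : a * w * b * w * c = (a * w * b) * (1 * w * c) by rewrite !mulrA mulr1.
by apply: I2_prod; apply: in_ideal_gen.
Qed.

Definition eqw x y := I2 (x - y).

Lemma eqw_refl x : eqw x x.
Proof. by rewrite /eqw subrr; apply: I2_0. Qed.
Lemma eqw_sym x y : eqw x y -> eqw y x.
Proof. by rewrite /eqw => /I2_N; rewrite opprB. Qed.
Lemma eqw_trans x y z : eqw x y -> eqw y z -> eqw x z.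
Proof. by rewrite /eqw => H1 H2; have := I2_D H1 H2; rewrite addrA subrK. Qed.
Lemma eqw_D x y x' y' : eqw x y -> eqw x' y' -> eqw (x + x') (y + y').
Proof. by rewrite /eqw => H1 H2; have := I2_D H1 H2; rewrite opprD addrACA. Qed.
Lemma eqw_Z k x y : eqw x y -> eqw (k *: x) (k *: y).
Proof. by rewrite /eqw => /(I2_Z k); rewrite scalerBr. Qed.
Lemma eqw_Ml a x y : eqw x y -> eqw (a * x) (a * y).
Proof. by rewrite /eqw => /(I2_Ml a); rewrite mulrBr. Qed.
Lemma eqw_Mr b x y : eqw x y -> eqw (x * b) (y * b).
Proof. by rewrite /eqw => /(I2_Mr b); rewrite mulrBl. Qed.
Lemma eqw_I2 x z : I2 z -> eqw (x + z) x.
Proof. by rewrite /eqw addrC addKr. Qed.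
Lemma eqw_eq x y : x = y -> eqw x y.
Proof. by move=> ->; apply: eqw_refl. Qed.

Definition Sp (T : Type) (F : T -> A) x :=
  exists s : seq (T * K), eqw x (\sum_(t <- s) t.2 *: F t.1).

Lemma Sp0 T (F : T -> A) : Sp F 0.
Proof. by exists [::]; rewrite big_nil; apply: eqw_refl. Qed.
Lemma SpD T (F : T -> A) x y : Sp F x -> Sp F y -> Sp F (x + y).
Proof. by move=> [s Hs] [t Ht]; exists (s ++ t); rewrite big_cat; apply: eqw_D. Qed.
Lemma SpZ T (F : T -> A) k x : Sp F x -> Sp F (k *: x).
Proof.
move=> [s Hs]; exists [seq (t.1, k * t.2) | t <- s].
suff -> : \sum_(t <- [seq (t.1, k * t.2) | t <- s]) t.2 *: F t.1
   = k *: \sum_(t <- s) t.2 *: F t.1 by exact: eqw_Z.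
by rewrite big_map scaler_sumr; apply: eq_bigr => t _; rewrite scalerA.
Qed.
Lemma Sp_gen T (F : T -> A) t : Sp F (F t).
Proof. by exists [:: (t, 1)]; rewrite big_cons big_nil addr0 scale1r; apply: eqw_refl. Qed.
Lemma Sp_eqw T (F : T -> A) x y : eqw x y -> Sp F y -> Sp F x.
Proof. by move=> H [s Hs]; exists s; apply: eqw_trans H Hs. Qed.
Lemma Sp_sum T (F : T -> A) I (r : seq I) (P : pred I) (G : I -> A) :
  (forall i, P i -> Sp F (G i)) -> Sp F (\sum_(i <- r | P i) G i).
Proof. by move=> H; apply: big_ind => //; [apply: Sp0 | apply: SpD]. Qed.

Lemma Sp_map T T' (F : T -> A) (F' : T' -> A) (g : A -> A) x :
  (forall x y, g (x + y) = g x + g y) -> (forall k x, g (k *: x) = k *: g x) ->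
  (forall x y, eqw x y -> eqw (g x) (g y)) ->
  (forall t, Sp F' (g (F t))) -> Sp F x -> Sp F' (g x).
Proof.
move=> gD gZ gE HF [s Hs].
have g0 : g 0 = 0.
  have := gD 0 0; rewrite addr0 => /(congr1 (fun z => z - g 0)) /=.
  by rewrite subrr addrK => E; exact: esym E.
apply: Sp_eqw (gE _ _ Hs) _.
elim: s {Hs} => [|t s IH]; first by rewrite big_nil g0; apply: Sp0.
by rewrite big_cons gD gZ; apply: SpD => //; apply: SpZ.
Qed.
End Ideal.

Section Rel.
Variables (K : fieldType) (A : algType K) (al : K) (d u : A).
Hypothesis Hrel : downup_rel al 0 1 d u.
Definition ww := d * u - al *: (u * d) - 1.
Local Notation w := ww.

Lemma dw0 : d * w = 0.
Proof.
case: Hrel => H1 _; rewrite /ww !mulrBr mulr1 -scalerAr mulrA mulrA H1.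
by rewrite scale0r scale1r addr0 (addrC (al *: _)) addrK subrr.
Qed.

Lemma wu0 : w * u = 0.
Proof.
case: Hrel => _ H2; rewrite /ww !mulrBl mul1r -scalerAl H2.
by rewrite scale0r scale1r addr0 (addrC (al *: _)) addrK subrr.
Qed.

Lemma du_eq : d * u = al *: (u * d) + 1 + w.
Proof. by rewrite /ww -(addrA (d * u)) -opprD (addrC (al *: (u * d) + 1)) subrK. Qed.

Lemma wI2 x : I2 w (w * x * w).
Proof. by have := @I2_wxw K A w 1 x 1; rewrite mul1r mulr1. Qed.

Lemma Ld i : eqw w (d * (u ^+ i * w)) (cc al i *: (u ^+ i.-1 * w)).
Proof.
elim: i => [|j IH].
  by rewrite expr0 mul1r dw0 scale0r; apply: eqw_refl.
have EQ : d * (u ^+ j.+1 * w) = al *: (u * (d * (u ^+ j * w))) + u ^+ j * w + w * (u ^+ j * w).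
  rewrite exprS -(mulrA u) (mulrA d) du_eq (mulrDl _ w) (mulrDl _ 1) mul1r -scalerAl.
  by rewrite -(mulrA u d).
rewrite EQ.
have E : u * (cc al j *: (u ^+ j.-1 * w)) = cc al j *: (u ^+ j * w).
  case: j {IH EQ} => [|j] /=; first by rewrite !scale0r mulr0.
  by rewrite -scalerAr mulrA -exprS.
have W3 : I2 w (w * (u ^+ j * w)) by rewrite mulrA; apply: wI2.
have := eqw_D (eqw_D (eqw_Z al (eqw_Ml u IH)) (eqw_refl w (u ^+ j * w)))
  (eqw_I2 0 W3).
rewrite E add0r addr0 => H.
apply: eqw_trans H _; apply: eqw_eq => /=.
by rewrite scalerA scalerDl scale1r.
Qed.

Lemma Rd l : eqw w ((w * d ^+ l) * u) (cc al l *: (w * d ^+ l.-1)).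
Proof.
elim: l => [|j IH].
  by rewrite expr0 mulr1 wu0 scale0r; apply: eqw_refl.
have EQ : w * d ^+ j.+1 * u = al *: ((w * d ^+ j * u) * d) + w * d ^+ j + (w * d ^+ j) * w.
  rewrite exprSr (mulrA w) -(mulrA _ d u) du_eq (mulrDr _ _ w) (mulrDr _ _ 1) mulr1 -scalerAr.
  by rewrite !mulrA.
rewrite EQ.
have E : (cc al j *: (w * d ^+ j.-1)) * d = cc al j *: (w * d ^+ j).
  case: j {IH EQ} => [|j] /=; first by rewrite !scale0r mul0r.
  by rewrite -scalerAl -mulrA -exprSr.
have := eqw_D (eqw_D (eqw_Z al (eqw_Mr d IH)) (eqw_refl w (w * d ^+ j)))
  (eqw_I2 0 (wI2 (d ^+ j))).
rewrite E add0r addr0 => H.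
apply: eqw_trans H _; apply: eqw_eq => /=.
by rewrite scalerA scalerDl scale1r.
Qed.
End Rel.

Section Gen.
Variables (K : fieldType) (A : algType K) (al : K) (d u : A).
Local Notation w := (ww al d u).
Definition FL (i : nat) : A := u ^+ i * w.
Definition FR (l : nat) : A := w * d ^+ l.
Definition PL (a : A) := forall i, Sp w FL (a * FL i).
Definition PR (a : A) := forall l, Sp w FR (FR l * a).
Definition Sbool : pred A := fun a => `[< PL a /\ PR a >].

Lemma SboolP a : reflect (PL a /\ PR a) (a \in Sbool).
Proof. exact: asboolP. Qed.

Lemma Sclosed : GRing.subsemialg_closed Sbool.
Proof.
split.
- apply/SboolP; split => i; [rewrite mul1r | rewrite mulr1]; exact: Sp_gen.
- split.
  + apply/SboolP; split => i; [rewrite mul0r | rewrite mulr0]; exact: Sp0.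
  + move=> a b /SboolP [La Ra] /SboolP [Lb Rb]; apply/SboolP; split => i.
    * by rewrite mulrDl; apply: SpD.
    * by rewrite mulrDr; apply: SpD.
- move=> k a /SboolP [La Ra]; apply/SboolP; split => i.
  + by rewrite -scalerAl; apply: SpZ.
  + by rewrite -scalerAr; apply: SpZ.
- move=> a b /SboolP [La Ra] /SboolP [Lb Rb]; apply/SboolP; split => i.
  + rewrite -mulrA; apply: (@Sp_map _ _ _ _ _ _ _ (fun x => a * x)) => //.
    * by move=> x y; rewrite mulrDr.
    * by move=> k x; rewrite scalerAr.
    * by move=> x y; apply: eqw_Ml.
  + rewrite mulrA; apply: (@Sp_map _ _ _ _ _ _ _ (fun x => x * b)) => //.
    * by move=> x y; rewrite mulrDl.
    * by move=> k x; rewrite scalerAl.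
    * by move=> x y; apply: eqw_Mr.
Qed.

HB.instance Definition _ := GRing.isSubalgClosed.Build K A Sbool Sclosed.

Record Ssub := SS { sval : A; sP : sval \in Sbool }.
HB.instance Definition _ := [isSub for sval].
HB.instance Definition _ := [Choice of Ssub by <:].
HB.instance Definition _ := [SubChoice_isSubAlgebra of Ssub by <:].

End Gen.

Section Gen2.
Variables (K : fieldType) (A : algType K) (al : K) (d u : A).
Local Notation w := (ww al d u).
Hypothesis HA : is_downup_algebra al 0 1 d u.

Lemma d_in : d \in Sbool al d u.
Proof.
have Hrel := HA.1.
apply/SboolP; split => i.
- apply: Sp_eqw (Ld Hrel i) _; apply: SpZ; exact: Sp_gen.
- by rewrite /FR -mulrA -exprSr; exact: Sp_gen.
Qed.

Lemma u_in : u \in Sbool al d u.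
Proof.
have Hrel := HA.1.
apply/SboolP; split => i.
- by rewrite /FL mulrA -exprS; exact: Sp_gen.
- apply: Sp_eqw (Rd Hrel i) _; apply: SpZ; exact: Sp_gen.
Qed.

Lemma all_in x : x \in Sbool al d u.
Proof.
pose sd : Ssub al d u := SS d_in.
pose su : Ssub al d u := SS u_in.
have Hrel' : downup_rel al 0 1 sd su.
  case: HA.1 => H1 H2; split; apply: val_inj => /=; [exact: H1 | exact: H2].
have [f [[fD [fZ [fM f1]]] fd fu _]] := HA.2 _ _ _ Hrel'.
have [f0 [_ _ _ U0]] := HA.2 _ _ _ HA.1.
have E1 := U0 id (conj (fun _ _ => erefl) (conj (fun _ _ => erefl) (conj (fun _ _ => erefl) erefl))) erefl erefl x.
have Hg : is_alg_hom (fun y => sval (f y)).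
  split; first by move=> a b; rewrite fD.
  split; first by move=> k a; rewrite fZ.
  split; first by move=> a b; rewrite fM.
  by rewrite f1.
have Hd : sval (f d) = d by rewrite fd.
have Hu : sval (f u) = u by rewrite fu.
have E2 := U0 (fun y => sval (f y)) Hg Hd Hu x.
have -> : x = sval (f x) by rewrite E2 -E1.
exact: sP.
Qed.
End Gen2.

Lemma single (V : zmodType) n a b (G : nat -> nat -> V) :
  (a < n)%N -> (b < n)%N -> (forall i l, (i != a) || (l != b) -> G i l = 0) ->
  \sum_(i < n) \sum_(l < n) G i l = G a b.
Proof.
move=> ha hb H0.
rewrite (bigD1 (Ordinal ha)) //= [X in _ + X]big1 ?addr0 => [|i Hi].
  rewrite (bigD1 (Ordinal hb)) //= [X in _ + X]big1 ?addr0 // => l Hl.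
  by apply: H0; rewrite orbC; apply/orP; left; move: Hl; apply: contra => /eqP E; apply/eqP/val_inj.
apply: big1 => l _; apply: H0; apply/orP; left.
by move: Hi; apply: contra => /eqP E; apply/eqP/val_inj.
Qed.

Lemma conv (K : fieldType) (V : lmodType K) (F : nat -> nat -> V) (s : seq ((nat * nat) * K)) :
  exists n (c : nat -> nat -> K),
    \sum_(t <- s) t.2 *: F t.1.1 t.1.2 = \sum_(i < n) \sum_(l < n) c i l *: F i l.
Proof.
pose n := (\max_(t <- s) maxn t.1.1 t.1.2).+1.
exists n.
exists (fun i l => \sum_(t <- s) (if t.1 == (i, l) then t.2 else 0)).
transitivity (\sum_(t <- s) \sum_(i < n) \sum_(l < n) (if t.1 == (nat_of_ord i, nat_of_ord l) then t.2 else 0) *: F i l); last first.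
  rewrite exchange_big; apply: eq_bigr => i _ /=.
  rewrite exchange_big; apply: eq_bigr => l _ /=.
  by rewrite scaler_suml.
rewrite big_seq [RHS]big_seq.
apply: eq_bigr => -[[a b] k] Hin /=.
have Hm : (maxn a b < n)%N.
  by rewrite /n ltnS; exact: (@leq_bigmax_seq _ s xpredT (fun t => maxn t.1.1 t.1.2) (a, b, k) Hin).
rewrite (@single _ _ a b (fun i l => (if (a, b) == (i, l) then k else 0) *: F i l)).
- by rewrite eqxx.
- by apply: leq_ltn_trans Hm; apply: leq_maxl.
- by apply: leq_ltn_trans Hm; apply: leq_maxr.
- move=> i l H; rewrite xpair_eqE.
  by case: eqP => [Ei|] /=; [case: eqP => [El|] /=|]; rewrite ?scale0r //; move: H; rewrite Ei El !eqxx.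
Qed.

Section Span.
Variables (K : fieldType) (A : algType K) (al : K) (d u : A).
Local Notation w := (ww al d u).
Hypothesis HA : is_downup_algebra al 0 1 d u.
Definition F2 (t : nat * nat) : A := u ^+ t.1 * w * d ^+ t.2.

Lemma Sp_awb a b : Sp w F2 (a * w * b).
Proof.
have /SboolP [La _] := all_in HA a.
have /SboolP [_ Rb] := all_in HA b.
have L0 := La 0; rewrite /FL expr0 mul1r in L0.
have R0 := Rb 0; rewrite /FR expr0 mulr1 in R0.
apply: (@Sp_map _ _ _ _ _ (FL al d u) F2 (fun x => x * b) (a * w)) => //.
- by move=> x y; rewrite mulrDl.
- by move=> k x; rewrite scalerAl.
- by move=> x y; apply: eqw_Mr.
move=> t; rewrite /FL -mulrA.
apply: (@Sp_map _ _ _ _ _ (FR al d u) F2 (fun x => u ^+ t * x) (w * b)) => //.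
- by move=> x y; rewrite mulrDr.
- by move=> k x; rewrite scalerAr.
- by move=> x y; apply: eqw_Ml.
by move=> l; rewrite /FR mulrA; exact: (@Sp_gen _ _ _ _ F2 (t, l)).
Qed.

Lemma span_part p : in_ideal w p ->
  exists (n : nat) (c : nat -> nat -> K),
    in_ideal_sq w (p - \sum_(i < n) \sum_(l < n) c i l *: (u ^+ i * w * d ^+ l)).
Proof.
move=> [s ->].
have : Sp w F2 (\sum_(q <- s) q.1 * w * q.2) by apply: Sp_sum => q _; apply: Sp_awb.
move=> [t Ht].
have [n [c E]] := conv (fun i l => u ^+ i * w * d ^+ l) t.
exists n, c; rewrite -E; exact: Ht.
Qed.
End Span.

Definition delta (K : fieldType) (s0 : bool) (k0 m0 : nat) : V K :=
  fun s k m => if (s == s0) && (k == k0) && (m == m0) then 1 else 0.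

Section Indep.
Variables (K : fieldType) (A : algType K) (al : K) (d u : A).
Local Notation w := (ww al d u).
Hypothesis HA : is_downup_algebra al 0 1 d u.

Lemma appD_pow l : app (Dop al ^+ l) (delta K true 0 0) = delta K true 0 l.
Proof.
elim: l => [|l IH]; first by rewrite expr0.
rewrite exprS app_mul IH.
apply: funext => -[]; apply: funext => -[|k]; apply: funext => -[|m];
rewrite /= /Dapp /delta /= ?expr0 ?mul1r ?mulr0 ?addr0 //.
Qed.

Lemma appOm_delta l : app (Om al) (delta K true 0 l) = delta K false 0 l.
Proof.
rewrite app_Om; apply: funext => -[]; apply: funext => -[|k]; apply: funext => m //=.
Qed.

Lemma appU_pow i l : app (Uop K ^+ i) (delta K false 0 l) = delta K false i l.
Proof.
elim: i => [|i IH]; first by rewrite expr0.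
rewrite exprS app_mul IH.
by apply: funext => -[]; apply: funext => -[|k]; apply: funext => m.
Qed.

Lemma indep_part (n : nat) (c : nat -> nat -> K) :
  in_ideal_sq w (\sum_(i < n) \sum_(l < n) c i l *: (u ^+ i * w * d ^+ l)) ->
  forall i l : nat, (i < n)%N -> (l < n)%N -> c i l = 0.
Proof.
have [f [[fD [fZ [fM f1]]] fd fu _]] := HA.2 _ _ _ (model_rel al).
have f0 : f 0 = 0.
  have := fD 0 0; rewrite addr0 => /(congr1 (fun z => z - f 0)) /=.
  by rewrite subrr addrK => E; exact: esym E.
have fN x : f (- x) = - f x.
  by apply/eqP; rewrite -subr_eq0 opprK -fD addNr f0.
have fX x k : f (x ^+ k) = f x ^+ k.
  by elim: k => [|k IH]; rewrite ?expr0 ?f1 // !exprS fM IH.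
have fsum I (r : seq I) (P : pred I) (F : I -> A) :
    f (\sum_(i <- r | P i) F i) = \sum_(i <- r | P i) f (F i).
  exact: (big_morph f fD f0).
have fw : f w = Om al.
  by rewrite /ww /Om !fD !fN fZ !fM fd fu f1.
pose Good (T : op K) := (forall v k m, app T v true k m = 0) /\
  (forall v, (forall k m, v true k m = 0) -> app T v = vzero K).
have G0 : Good 0 by [].
have GD x y : Good x -> Good y -> Good (x + y).
  move=> [x1 x2] [y1 y2]; split.
    by move=> v k m; rewrite app_add /vadd x1 y1 addr0.
  move=> v H; rewrite app_add x2 // y2 //.
  by apply: funext => s; apply: funext => k; apply: funext => m; rewrite /vadd /vzero addr0.
have Gawb a b : Good (f (a * w * b)).
  rewrite !fM fw; split.
    by move=> v k m; rewrite !app_mul app_Om; apply: appS.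
  move=> v H; rewrite !app_mul app_Om.
  have -> : Wv (app (f b) v) = vzero K.
    apply: funext => -[]; apply: funext => -[|k]; apply: funext => m //=.
    exact: appS.
  exact: app0.
have Gid p : in_ideal w p -> Good (f p).
  move=> [s ->]; rewrite fsum; apply: (big_ind Good G0 GD) => q _; exact: Gawb.
move=> [s [Hs Es]] i0 l0 hi hl.
have Z : app (f (\sum_(p <- s) p.1 * p.2)) (delta K true 0 0) = vzero K.
  rewrite fsum big_seq; apply: (big_ind (fun T : op K => app T (delta K true 0 0) = vzero K)) => //.
    by move=> x y Hx Hy; rewrite app_add Hx Hy; apply: funext => ss; apply: funext => k; apply: funext => m; rewrite /vadd /vzero addr0.
  move=> p /Hs [H1 H2]; rewrite fM app_mul.
  have [G21 _] := Gid _ H2; have [_ G12] := Gid _ H1.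
  exact: G12.
rewrite -Es in Z.
have := congr1 (fun v => v false i0 l0) Z.
rewrite /vzero /= fsum.
have ev x y : app (x + y) (delta K true 0 0) false i0 l0
   = app x (delta K true 0 0) false i0 l0 + app y (delta K true 0 0) false i0 l0 by [].
rewrite (big_morph (fun T => app T (delta K true 0 0) false i0 l0) ev (erefl _)).
under eq_bigr do rewrite fsum (big_morph (fun T => app T (delta K true 0 0) false i0 l0) ev (erefl _)).
under eq_bigr do under eq_bigr do rewrite fZ !fM !fX fw fu fd app_scale !app_mul appD_pow appOm_delta appU_pow.
rewrite (@single _ _ i0 l0 (fun i l => vscale (c i l) (delta K false i l) false i0 l0)) //.
- by rewrite /vscale /delta !eqxx mulr1.
- move=> i l H; rewrite /vscale /delta /=.
  by case: eqP => [Ei|] /=; [case: eqP => [El|] /=|]; rewrite ?mulr0 //; move: H; rewrite Ei El !eqxx.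
Qed.
End Indep.

Lemma cc_formula (K : fieldType) (al : K) l : al != 1 -> cc al l = (al ^+ l - 1) / (al - 1).
Proof.
move=> H; have H' : al - 1 != 0 by rewrite subr_eq0.
elim: l => [|l IH] /=; first by rewrite expr0 subrr mul0r.
rewrite IH exprS; field; exact: H'.
Qed.

Unset Implicit Arguments.
Set Strict Implicit.

Theorem corollary2p6 (K : fieldType) (charK0 : [pchar K] =i pred0) (al : K)
    (A : algType K) (d u : A) (HA : is_downup_algebra al 0 1 d u) :
  let w := d * u - al *: (u * d) - 1 in
  (* the classes [u^i w d^l] span <w>/<w>^2 *)
  (forall p : A, in_ideal w p ->
     exists (n : nat) (c : nat -> nat -> K),
       in_ideal_sq w (p - \sum_(i < n) \sum_(l < n) c i l *: (u ^+ i * w * d ^+ l))) /\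
  (* and are K-linearly independent in <w>/<w>^2 *)
  (forall (n : nat) (c : nat -> nat -> K),
     in_ideal_sq w (\sum_(i < n) \sum_(l < n) c i l *: (u ^+ i * w * d ^+ l)) ->
     forall i l : nat, (i < n)%N -> (l < n)%N -> c i l = 0) /\
  (al != 1 ->
   forall i l : nat,
     in_ideal_sq w (u ^+ i * w * d ^+ l * u
        - ((al ^+ l - 1) / (al - 1)) *: (u ^+ i * w * d ^+ l.-1)) /\
     in_ideal_sq w (d * u ^+ i * w * d ^+ l
        - ((al ^+ i - 1) / (al - 1)) *: (u ^+ i.-1 * w * d ^+ l))).
Proof.
move=> w; rewrite /w -/(ww al d u).
split; first exact: span_part HA.
split; first exact: indep_part HA.
move=> Hal i l; split.
- have := eqw_Ml (u ^+ i) (Rd HA.1 l).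
  by rewrite /eqw -scalerAr !mulrA cc_formula.
- have := eqw_Mr (d ^+ l) (Ld HA.1 i).
  by rewrite /eqw -scalerAl !mulrA cc_formula.
Qed.
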